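(* Let $f$ be a uniform continuation of $F$, and let $K$ be a sequence of positive real numbers approaching $\infty$. Then $\{f^{-1}(\lfloor K_n\rfloor)\}=\{f^{-1}(K_n)\}+o(1)$ as $n\to\infty$.
   Context: $F$: $F_1=1,F_2=2,F_{n+2}=F_{n+1}+F_n$. A uniform continuation of $F$ is an increasing continuous function $f:[1,\infty)\to\mathbb{R}$ with $f(n)=F_n$ for all $n\in\mathbb{N}$ such that $f_n(p)=\frac{f(n+p)-f(n)}{f(n+1)-f(n)}$ ($p\in[0,1]$) converges uniformly on $[0,1]$ to an increasing continuous function $f_\infty$; $f^{-1}$ denotes the inverse of $f$, and $\{y\}$ denotes the fractional part. *)

(* Defs.v *)
From Stdlib Require Import Reals Lra.
From Coquelicot Require Import Coquelicot.
Open Scope R_scope.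

(* Fib_aux k = F_{k+1}: F_1 = 1, F_2 = 2, F_{n+2} = F_{n+1} + F_n. *)
Fixpoint Fib_aux (k : nat) : R :=
  match k with
  | O => 1
  | S O => 2
  | S ((S k') as k1) => Fib_aux k1 + Fib_aux k'
  end.

(* F n = F_n for n >= 1 (F 0 is an unused dummy value). *)
Definition F (n : nat) : R := Fib_aux (Nat.pred n).

Definition fseq (f : R -> R) (n : nat) (p : R) : R :=
  (f (INR n + p) - f (INR n)) / (f (INR n + 1) - f (INR n)).

Definition uniform_continuation (f : R -> R) : Prop :=
  (forall x y, 1 <= x -> x < y -> f x < f y) /\
  (forall x, 1 <= x ->
     filterlim f (within (fun y => 1 <= y) (locally x)) (locally (f x))) /\
  (forall n : nat, (1 <= n)%nat -> f (INR n) = F n) /\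
  (exists finf : R -> R,
     (forall p q, 0 <= p -> p < q -> q <= 1 -> finf p < finf q) /\
     (forall p, 0 <= p <= 1 ->
        filterlim finf (within (fun q => 0 <= q <= 1) (locally p))
                  (locally (finf p))) /\
     (forall eps, 0 < eps -> exists N : nat, forall n : nat,
        (N <= n)%nat -> (1 <= n)%nat ->
        forall p, 0 <= p <= 1 -> Rabs (fseq f n p - finf p) < eps)).

(* fractional part {y} = y - floor y  (Stdlib: frac_part, Int_part = floor) *)
Definition frac (y : R) : R := frac_part y.
Definition floorR (y : R) : R := IZR (Int_part y).

(* Main.v *)
Require Import Defs.
From Stdlib Require Import Reals Lra Lia ZArith.
From Coquelicot Require Import Coquelicot.
Open Scope R_scope.

Lemma Fib_SS k : Fib_aux (S (S k)) = Fib_aux (S k) + Fib_aux k.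
Proof. reflexivity. Qed.

Lemma Fib_props k : 1 <= Fib_aux k /\ Fib_aux k <= Fib_aux (S k)
  /\ Fib_aux (S k) <= 2 * Fib_aux k /\ 3 * Fib_aux k <= 2 * Fib_aux (S k).
Proof.
  induction k as [|k IH].
  - simpl. lra.
  - rewrite Fib_SS. lra.
Qed.

Lemma Fib_mono a b : (a <= b)%nat -> Fib_aux a <= Fib_aux b.
Proof.
  induction 1. lra. pose proof (Fib_props m). lra.
Qed.

Lemma Fib_nat k : exists z : nat, Fib_aux k = INR z.
Proof.
  induction k as [k IH] using lt_wf_ind.
  destruct k as [|[|k]].
  - exists 1%nat. reflexivity.
  - exists 2%nat. simpl. lra.
  - destruct (IH (S k) ltac:(lia)) as [a Ha]. destruct (IH k ltac:(lia)) as [b Hb].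
    exists (a + b)%nat. rewrite Fib_SS, plus_INR, Ha, Hb. reflexivity.
Qed.

Lemma Int_part_unique (t : R) (z : Z) : IZR z <= t < IZR z + 1 -> Int_part t = z.
Proof.
  intros [H1 H2]. unfold Int_part.
  assert (z + 1 = up t)%Z.
  { apply tech_up; rewrite plus_IZR; simpl; lra. }
  lia.
Qed.

Lemma grid (g : R -> R) :
  (forall p q, 0 <= p -> p < q -> q <= 1 -> g p < g q) ->
  forall eps, 0 < eps -> exists d, 0 < d /\
   forall p p', 0 <= p' -> p' <= p -> p <= 1 -> eps <= p - p' -> d <= g p - g p'.
Proof.
  intros Hg eps Heps.
  assert (Hw : forall p q, 0 <= p -> p <= q -> q <= 1 -> g p <= g q).
  { intros p q H1 H2 H3. destruct (Rle_lt_or_eq_dec _ _ H2) as [h|h].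
    - left; apply Hg; lra.
    - subst; lra. }
  destruct (archimed (2 / eps)) as [Ha1 Ha2].
  set (k := Z.to_nat (up (2 / eps))).
  assert (Hk : INR k = IZR (up (2 / eps))).
  { unfold k. rewrite INR_IZR_INZ, Z2Nat.id; [reflexivity|].
    apply le_IZR. assert (0 < 2/eps) by (apply Rdiv_lt_0_compat; lra). lra. }
  assert (Hk2 : 2 / eps < INR k) by lra.
  assert (Hk0 : 0 < INR k).
  { assert (0 < 2/eps) by (apply Rdiv_lt_0_compat; lra). lra. }
  assert (Hk3 : 2 / INR k < eps).
  { apply (Rmult_lt_reg_r (INR k)); [lra|].
    unfold Rdiv. rewrite Rmult_assoc, Rinv_l by lra.
    rewrite Rmult_1_r.
    replace 2 with ((2/eps)*eps) by (field; lra). nra. }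
  assert (Hgap : forall j, exists d, 0 < d /\ forall i, (i < j)%nat -> (i < k)%nat ->
     d <= g (INR (S i) / INR k) - g (INR i / INR k)).
  { induction j as [|j [d [Hd IH]]].
    - exists 1. split; [lra|]. intros; lia.
    - destruct (lt_dec j k) as [Hjk|Hjk].
      + assert (Hpos : g (INR j / INR k) < g (INR (S j) / INR k)).
        { apply Hg.
          - apply Rdiv_le_0_compat; [apply pos_INR|lra].
          - apply Rmult_lt_compat_r. apply Rinv_0_lt_compat; lra. rewrite S_INR; lra.
          - apply (Rmult_le_reg_r (INR k)); [lra|]. unfold Rdiv.
            rewrite Rmult_assoc, Rinv_l by lra. rewrite Rmult_1_r, Rmult_1_l.
            apply le_INR; lia. }
        exists (Rmin d (g (INR (S j) / INR k) - g (INR j / INR k))).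
        split. { apply Rmin_glb_lt; lra. }
        intros i Hi Hik. destruct (Nat.eq_dec i j) as [->|Hne].
        * apply Rmin_r.
        * eapply Rle_trans; [apply Rmin_l|]. apply IH; lia.
      + exists d. split; [lra|]. intros i Hi Hik. apply IH; lia. }
  destruct (Hgap k) as [d [Hd Hgk]].
  exists d. split; [exact Hd|].
  intros p p' Hp' Hpp Hp1 Heq.
  destruct (archimed (p' * INR k)) as [Hb1 Hb2].
  assert (0 <= p' * INR k) by (apply Rmult_le_pos; lra).
  set (i := Z.to_nat (up (p' * INR k))).
  assert (Hi : INR i = IZR (up (p' * INR k))).
  { unfold i. rewrite INR_IZR_INZ, Z2Nat.id; [reflexivity|].
    apply le_IZR. lra. }
  assert (Hik : INR i / INR k > p').
  { apply (Rmult_lt_reg_r (INR k)); [lra|]. unfold Rdiv.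
    rewrite Rmult_assoc, Rinv_l by lra. lra. }
  assert (Hik2 : INR (S i) / INR k <= p).
  { rewrite S_INR. unfold Rdiv. rewrite Rmult_plus_distr_r.
    assert (INR i * / INR k <= p' + / INR k).
    { apply (Rmult_le_reg_r (INR k)); [lra|].
      rewrite Rmult_assoc, Rinv_l by lra. rewrite Rmult_plus_distr_r, Rinv_l by lra. lra. }
    unfold Rdiv in Hk3. lra. }
  assert (HiK : (i < k)%nat).
  { assert (INR (S i) <= INR k).
    { apply (Rmult_le_reg_r (/ INR k)). apply Rinv_0_lt_compat; lra.
      rewrite Rinv_r by lra. unfold Rdiv in Hik2. lra. }
    apply INR_le in H0. lia. }
  specialize (Hgk i HiK HiK).
  assert (0 <= INR i / INR k) by (apply Rdiv_le_0_compat; [apply pos_INR|lra]).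
  assert (g (INR (S i) / INR k) <= g p).
  { apply Hw; try lra. apply Rdiv_le_0_compat; [apply pos_INR|lra]. }
  assert (INR i / INR k <= INR (S i) / INR k).
  { apply Rmult_le_compat_r. left; apply Rinv_0_lt_compat; lra. rewrite S_INR; lra. }
  assert (g p' <= g (INR i / INR k)) by (apply Hw; lra).
  lra.
Qed.

Lemma key (f finv : R -> R) :
  uniform_continuation f ->
  (forall y, 1 <= y -> 1 <= finv y /\ f (finv y) = y) ->
  forall eps, 0 < eps -> exists Y, forall y, Y <= y ->
    Rabs (frac (finv (floorR y)) - frac (finv y)) < eps.
Proof.
  intros [Hinc [_ [HF [finf [Hfm [_ Hunif]]]]]] Hinv eps Heps.
  assert (Hw : forall a b, 1 <= a -> a <= b -> f a <= f b).
  { intros a b H1 H2. destruct (Rle_lt_or_eq_dec _ _ H2) as [h|h].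
    - left; apply Hinc; lra.
    - subst; lra. }
  destruct (grid finf Hfm eps Heps) as [d [Hd Hg]].
  destruct (Hunif (d/3)) as [N0 HN0]; [lra|].
  exists (Rmax 2 (Rmax (9/d + 1) (F N0))).
  intros y Hy.
  pose proof (Rmax_l 2 (Rmax (9/d + 1) (F N0))).
  pose proof (Rmax_r 2 (Rmax (9/d + 1) (F N0))).
  pose proof (Rmax_l (9/d + 1) (F N0)).
  pose proof (Rmax_r (9/d + 1) (F N0)).
  destruct (Hinv y ltac:(lra)) as [Hx1 Hfx].
  set (x := finv y) in *.
  destruct (base_Int_part x) as [Hz1 Hz2].
  set (z := Int_part x) in *.
  assert (Hz : (1 <= z)%Z).
  { assert (0 < IZR z) by lra. apply lt_IZR in H3. lia. }
  set (N := Z.to_nat z).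
  assert (HN : INR N = IZR z).
  { unfold N. rewrite INR_IZR_INZ, Z2Nat.id; [reflexivity|lia]. }
  assert (HN1 : (1 <= N)%nat) by (unfold N; lia).
  assert (HN1R : 1 <= INR N) by (rewrite HN; apply IZR_le; exact Hz).
  assert (HfN : f (INR N) = F N) by (apply HF; exact HN1).
  assert (HfN1 : f (INR N + 1) = F (S N)) by (rewrite <- S_INR; apply HF; lia).
  assert (HFy : F N <= y).
  { rewrite <- HfN, <- Hfx. apply Hw; lra. }
  assert (HyF : y < F (S N)).
  { rewrite <- HfN1, <- Hfx. apply Hinc; lra. }
  destruct (base_Int_part y) as [Hm1 Hm2].
  assert (Hmdef : floorR y = IZR (Int_part y)) by reflexivity.
  set (m := floorR y) in *.
  assert (HFm : F N <= m).
  { unfold F. destruct (Fib_nat (Nat.pred N)) as [a Ha]. pose proof HFy as HFy'. unfold F in HFy'. rewrite Ha in *.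
    rewrite Hmdef. destruct (Rle_or_lt (INR a) (IZR (Int_part y))) as [h|h]; [exact h|].
    exfalso. rewrite INR_IZR_INZ in *. apply lt_IZR in h.
    assert (IZR (Int_part y) + 1 <= IZR (Z.of_nat a)).
    { rewrite <- plus_IZR. apply IZR_le. lia. }
    lra. }
  assert (Hm_le : m <= y) by lra.
  destruct (Hinv m ltac:(lra)) as [Hx'1 Hfx'].
  set (x' := finv m) in *.
  assert (Hx'N : INR N <= x').
  { destruct (Rle_or_lt (INR N) x') as [h|h]; [exact h|].
    exfalso. assert (f x' < f (INR N)) by (apply Hinc; lra). lra. }
  assert (Hx'x : x' <= x).
  { destruct (Rle_or_lt x' x) as [h|h]; [exact h|].
    exfalso. assert (f x < f x') by (apply Hinc; lra). lra. }
  assert (Hfracx : frac x = x - INR N).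
  { unfold frac, frac_part. fold z. rewrite HN. reflexivity. }
  assert (Hfracx' : frac x' = x' - INR N).
  { unfold frac, frac_part. rewrite (Int_part_unique x' z), HN; [reflexivity|lra]. }
  assert (HNN0 : (N0 <= N)%nat).
  { destruct (le_lt_dec N0 N) as [h|h]; [exact h|]. exfalso.
    assert (F (S N) <= F N0).
    { unfold F. simpl. apply Fib_mono. lia. }
    lra. }
  assert (HG : F (S N) <= 3 * (F (S N) - F N)).
  { unfold F. replace (Nat.pred (S N)) with (S (Nat.pred N)) by lia.
    pose proof (Fib_props (Nat.pred N)). lra. }
  set (p := x - INR N). set (p' := x' - INR N).
  assert (Hp : 0 <= p <= 1) by (unfold p; lra).
  assert (Hp' : 0 <= p' <= 1) by (unfold p'; lra).
  pose proof (HN0 N HNN0 HN1 p Hp) as E1.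
  pose proof (HN0 N HNN0 HN1 p' Hp') as E2.
  unfold fseq in E1, E2.
  replace (INR N + p) with x in E1 by (unfold p; ring).
  replace (INR N + p') with x' in E2 by (unfold p'; ring).
  rewrite Hfx, HfN, HfN1 in E1. rewrite Hfx', HfN, HfN1 in E2.
  set (G := F (S N) - F N) in *.
  assert (HGpos : y / 3 < G) by lra.
  assert (Hdiff : (y - F N) / G - (m - F N) / G < d / 3).
  { replace ((y - F N) / G - (m - F N) / G) with ((y - m) / G) by (field; lra).
    apply (Rmult_lt_reg_r G); [lra|].
    unfold Rdiv. rewrite Rmult_assoc, Rinv_l by lra.
    assert (9 / d * d = 9) by (field; lra).
    assert (9 < y * d) by nra.
    nra. }
  apply Rabs_def2 in E1. apply Rabs_def2 in E2.
  assert (Hff : finf p - finf p' < d) by lra.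
  assert (Hpp : p - p' < eps).
  { destruct (Rlt_or_le (p - p') eps) as [h|h]; [exact h|].
    exfalso. assert (d <= finf p - finf p') by (apply Hg; unfold p, p' in *; lra).
    lra. }
  rewrite Hfracx, Hfracx'. apply Rabs_def1; unfold p, p' in *; lra.
Qed.

Theorem lemma5p5 (f finv : R -> R) (K : nat -> R) :
  uniform_continuation f ->
  (* finv is the inverse of f : [1,oo) -> [1,oo) *)
  (forall y, 1 <= y -> 1 <= finv y /\ f (finv y) = y) ->
  (forall n, 0 < K n) ->
  is_lim_seq K p_infty ->
  is_lim_seq (fun n => frac (finv (floorR (K n))) - frac (finv (K n))) 0.
Proof.
  intros Huc Hinv _ HK.
  apply is_lim_seq_spec. intros eps.
  destruct (key f finv Huc Hinv eps (cond_pos eps)) as [Y HY].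
  apply is_lim_seq_spec in HK. destruct (HK Y) as [M HM].
  exists M. intros n Hn. rewrite Rminus_0_r. apply HY. left. apply HM. exact Hn.
Qed.
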